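(* Let $X_1,\ldots,X_n$ be non-empty sets and $S\subset X_1\times\cdots\times X_n$ be relatively full. Then every maximal good subset $M\subset S$ is full.
   Context: $\Pi_i$ denotes the canonical projection onto $X_i$. A subset $T$ is good if every complex-valued function $f$ on $T$ can be written as $f(x_1,\ldots,x_n)=u_1(x_1)+\cdots+u_n(x_n)$ on $T$ for suitable functions $u_i$ on $X_i$. $T$ is full if it is a maximal good subset of $\Pi_1T\times\cdots\times\Pi_nT$. A maximal good subset of $S$ is a good subset of $S$ not strictly contained in any other good subset of $S$. $U(S)$ denotes the set of functions $f$ on $S$ for which there exist functions $u_i$ on $\Pi_iS$ with $f=u_1+\cdots+u_n$ on $S$. The set $S$ is relatively full if there exist $x_i^0\in\Pi_iS$, $1\le i\le n-1$, such that every $f\in U(S)$ has a unique representation $f=u_1+\cdots+u_n$ on $S$ (with $u_i$ functions on $\Pi_iS$) once the values $u_i(x_i^0)$, $1\le i\le n-1$, are prescribed. *)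

(* Defs.v *)
From HB Require Import structures.
From mathcomp Require Import all_boot all_order all_algebra.
From mathcomp Require Import complex.
From mathcomp Require Import reals.
Set Implicit Arguments. Unset Strict Implicit. Unset Printing Implicit Defensive.
Import Order.TTheory GRing.Theory Num.Theory.
Local Open Scope ring_scope.

Section Defs.
Variables (R : realType) (n : nat) (X : 'I_n -> Type).

Definition point := forall i : 'I_n, X i.
Definition pset := point -> Prop.

Definition proj (i : 'I_n) (T : pset) : X i -> Prop :=
  fun x => exists t, T t /\ t i = x.
Arguments proj : clear implicits.

Definition sumrep (u : forall i : 'I_n, X i -> complex R) (t : point) : complex R :=
  \sum_(i < n) u i (t i).

Definition subset (A B : pset) : Prop := forall t, A t -> B t.

Definition good (T : pset) : Prop :=
  forall f : point -> complex R,
    exists u : forall i : 'I_n, X i -> complex R, forall t, T t -> f t = sumrep u t.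

Definition maximal_good (S M : pset) : Prop :=
  [/\ good M, subset M S &
      forall M', good M' -> subset M' S -> subset M M' -> subset M' M].

Definition prod_proj (T : pset) : pset := fun t => forall i, proj i T (t i).

Definition full (T : pset) : Prop := maximal_good (prod_proj T) T.

Definition represents (S : pset) (f : point -> complex R)
  (u : forall i : 'I_n, X i -> complex R) : Prop :=
  forall t, S t -> f t = sumrep u t.

(* Relatively full: there are base points x_i^0 in Pi_i S (1 <= i <= n-1)
   such that any two representations of the same f in U(S) (functions u_i
   considered on Pi_i S) that agree at the x_i^0, i <= n-1, coincide on
   each Pi_i S. (Existence of a representation with prescribed values is
   automatic by shifting constants.) *)
Definition relatively_full (S : pset) : Prop :=
  exists x0 : point,
    (forall i : 'I_n, (i < n.-1)%N -> proj i S (x0 i)) /\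
    forall (f : point -> complex R) (u v : forall i : 'I_n, X i -> complex R),
      represents S f u -> represents S f v ->
      (forall i : 'I_n, (i < n.-1)%N -> u i (x0 i) = v i (x0 i)) ->
      forall (i : 'I_n) (x : X i), proj i S x -> u i x = v i x.

End Defs.
Arguments proj {n X} i T _.

(* Main.v *)
Require Import Defs.
From mathcomp Require Import all_boot all_order all_algebra.
From mathcomp Require Import complex reals.
From Stdlib Require Import Classical ClassicalEpsilon.
Set Implicit Arguments. Unset Strict Implicit. Unset Printing Implicit Defensive.
Import Order.TTheory GRing.Theory Num.Theory.
Local Open Scope ring_scope.

Lemma rf_const (R : realType) (n : nat) (X : 'I_n -> Type) (S : pset X) :
  relatively_full R S -> forall w : forall i : 'I_n, X i -> complex R,
  (forall t, S t -> sumrep w t = 0) ->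
  forall i x y, proj i S x -> proj i S y -> w i x = w i y.
Proof.
case=> x0 [_ H] w hw i x y hx hy.
pose A := \sum_(j < n) (if (j < n.-1)%N then w j (x0 j) else 0).
pose v := fun (j:'I_n) (_ : X j) => if (j < n.-1)%N then w j (x0 j) else - A.
have hv : forall t, sumrep v t = 0.
  move=> t; rewrite /sumrep /v /A.
  case: n X S x0 H w hw i x y hx hy A v t => [|m] X S x0 H w hw i; first by case: i.
  move=> *; rewrite !big_ord_recr /= ltnn addr0.
  under eq_bigr => j _ do rewrite (ltn_ord j).
  under [X in _ + - X]eq_bigr => j _ do rewrite (ltn_ord j).
  by rewrite subrr.
have Hw : represents S (fun _ => 0) w by move=> t St; rewrite hw.
have Hv : represents S (fun _ => 0) v by move=> t St; rewrite hv.
have Hag : forall j : 'I_n, (j < n.-1)%N -> w j (x0 j) = v j (x0 j).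
  by move=> j hj; rewrite /v hj.
rewrite (H _ _ _ Hw Hv Hag i x hx) (H _ _ _ Hw Hv Hag i y hy).
by [].
Qed.

Theorem theorem5 (R : realType) (n : nat) (X : 'I_n -> Type)
  (Xne : forall i : 'I_n, inhabited (X i)) (S : pset X) :
  relatively_full R S ->
  forall M : pset X, maximal_good R S M -> full R M.
Proof.
move=> rf M [gM sMS maxM]; split => //.
  by move=> t Mt i; exists t.
move=> M' gM' sM'P sMM' p M'p.
apply: NNPP => nMp.
pose f := fun t : point X => if excluded_middle_informative (t = p) then (1 : complex R) else 0.
have [w hw] := gM' f.
have w0M : forall t, M t -> sumrep w t = 0.
  move=> t Mt; rewrite -hw; last exact: sMM'.
  rewrite /f; case: excluded_middle_informative => // E.
  by subst t.
have wp : sumrep w p = 1.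
  by rewrite -hw // /f; case: excluded_middle_informative.
have w0S : forall s, S s -> sumrep w s = 0.
  move=> s Ss; apply: NNPP => ws.
  have gMs : good R (fun t => M t \/ t = s).
    move=> g; have [u hu] := gM g.
    pose c := (g s - sumrep u s) / sumrep w s.
    exists (fun i x => u i x + c * w i x) => t Ht.
    have -> : sumrep (fun i x => u i x + c * w i x) t = sumrep u t + c * sumrep w t.
      by rewrite /sumrep big_split /= mulr_sumr.
    case: Ht => [Mt|->]; first by rewrite w0M // mulr0 addr0 hu.
    rewrite /c mulfVK; last by apply/eqP.
    by rewrite addrC subrK.
  have h1 : Defs.subset (fun t => M t \/ t = s) S by move=> t [Mt|->] //; exact: sMS.
  have h2 : Defs.subset M (fun t => M t \/ t = s) by move=> t Mt; left.
  have Ms : M s := maxM _ gMs h1 h2 s (or_intror erefl).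
  by apply: ws; apply: w0M.
have hc := rf_const rf w0S.
case: (classic (exists m, M m)) => [[m Mm]|nM].
  have : sumrep w p = sumrep w m.
    apply: eq_bigr => i _; apply: hc.
      have [t [Mt <-]] := sM'P p M'p i; exists t; split => //; exact: sMS.
    by exists m; split => //; exact: sMS.
  by rewrite wp w0M // => /eqP; rewrite oner_eq0.
have : sumrep w p = 0.
  apply: big1 => i _; have [t [Mt _]] := sM'P p M'p i.
  by exfalso; apply: nM; exists t.
by rewrite wp => /eqP; rewrite oner_eq0.
Qed.
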